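(* Let $r,n\ge1$ and let $q\ge0$ be a real parameter. Then for every $w\in W_{r,n}$, $$(rq+1)^{\ell_n(w)}=\sum_{j=0}^n\binom{q+n-j}{n}\phi^n_j(w),$$ where $\binom{x}{n}=\frac{x(x-1)\cdots(x-n+1)}{n!}$ is the generalized binomial coefficient.
   Context: $W_{r,n}=\mathbb{Z}_r\wr\mathfrak{S}_n$ is the group of $r$-colored permutations $w=w(1)^{c_1}\cdots w(n)^{c_n}$ ($w(1)\cdots w(n)\in\mathfrak S_n$, $c_i\in\{0,\dots,r-1\}$). $\ell_n(w)$ is the number of cycles of the permutation $w(1)\cdots w(n)$ whose color (sum mod $r$ of the colors $c_i$ of its entries) is $0$. Set $\chi^n_k(w)=(rk+1)^{\ell_n(w)}$ for integers $k\ge0$ and define the Foulkes characters $\phi^n_j=\sum_{i=0}^j(-1)^i\binom{n+1}{i}\chi^n_{j-i}$, $j=0,\dots,n$. *)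

(* Defs.v *)
From mathcomp Require Import all_boot all_order all_algebra all_fingroup all_solvable.
Set Implicit Arguments. Unset Strict Implicit. Unset Printing Implicit Defensive.
Import Order.TTheory GRing.Theory Num.Theory.
Local Open Scope ring_scope.

Definition colperm (r n : nat) : Type := ('S_n * {ffun 'I_n -> 'I_r})%type.

Definition cycle_color (r n : nat) (c : {ffun 'I_n -> 'I_r}) (C : {set 'I_n}) : nat :=
  ((\sum_(i in C) nat_of_ord (c i)) %% r)%N.

Definition ell (r n : nat) (w : colperm r n) : nat :=
  #|[set C in porbits w.1 | cycle_color w.2 C == 0%N]|.

Definition chi (R : nzRingType) (r n k : nat) (w : colperm r n) : R :=
  ((r * k + 1)%:R) ^+ ell w.

Definition foulkes (R : nzRingType) (r n j : nat) (w : colperm r n) : R :=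
  \sum_(0 <= i < j.+1) (-1) ^+ i * ('C(n.+1, i))%:R * chi R (j - i) w.

Definition gbinom (R : fieldType) (x : R) (n : nat) : R :=
  (\prod_(0 <= k < n) (x - k%:R)) / (n`!)%:R.

(* Main.v *)
Require Import Defs.
From mathcomp Require Import all_boot all_order all_algebra all_fingroup.
From mathcomp Require Import zify ring.
Import Order.TTheory GRing.Theory Num.Theory.
Local Open Scope ring_scope.


Lemma Sid (R : comNzRingType) n d :
  \sum_(i < d.+1) (-1) ^+ i * ('C(n.+1, i))%:R * ('C(n + d - i, n))%:R
  = (d == 0%N)%:R :> R.
Proof.
elim: n d => [|n IH] d.
  case: d => [|d]; first by rewrite big_ord1 /= !bin0 expr0 !mul1r.
  rewrite big_ord_recl big_ord_recl big1 /=; last first.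
    by move=> i _; rewrite /bump /= bin_small ?mulr0 ?mul0r.
  by rewrite !bin0 /bump /= bin1 expr0 expr1 !mul1r mulr1 addr0 mulN1r subrr.
rewrite -IH.
pose x (i : nat) := ('C(n.+1 + d - i, n.+1))%:R : R.
pose y (i : nat) := ('C(n + d - i, n.+1))%:R : R.
pose A := \sum_(i < d.+1) (-1) ^+ i * ('C(n.+1, i))%:R * x i.
pose B := \sum_(i < d.+1) (-1) ^+ i * ('C(n.+1, i))%:R * y i.
have E1 : \sum_(i < d.+1) (-1) ^+ i * ('C(n.+2, i))%:R * ('C(n.+1 + d - i, n.+1))%:R = A - B.
  rewrite /A /B [X in _ = _ - X]big_ord_recr /=.
  have -> : y d = 0 by rewrite /y addnK bin_small.
  rewrite mulr0 addr0.
  rewrite big_ord_recl [X in _ = X - _]big_ord_recl -addrA; congr (_ + _).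
  rewrite -sumrB; apply: eq_bigr => i _.
  rewrite /x !lift0 binS natrD /x exprS.
  have -> : (n.+1 + d - i.+1 = n + d - i)%N by rewrite addSn subSS.
  by rewrite /y; ring.
rewrite E1 /A /B -sumrB; apply: eq_bigr => i _.
rewrite -mulrBr; congr (_ * _).
rewrite /x /y.
have -> : (n.+1 + d - i = (n + d - i).+1)%N.
  have := ltn_ord i; lia.
by rewrite binS natrD addrC addKr.
Qed.
Lemma Tid (R : comNzRingType) n m e : (m <= n)%N ->
  \sum_(i < e.+1) (-1) ^+ i * ('C(n.+1, i))%:R * ('C(m + e - i, n))%:R
  = (m + e == n)%:R :> R.
Proof.
move=> mn.
case: (ltnP (m + e) n) => hme.
  rewrite big1; first by rewrite (_ : (m + e == n) = false) //; apply/negbTE; rewrite neq_ltn hme.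
  move=> i _; rewrite (@bin_small (m + e - i) n) ?mulr0 //; lia.
pose d := (m + e - n)%N.
have hd : (d <= e)%N by rewrite /d; lia.
rewrite -(big_mkord xpredT (fun i => (-1) ^+ i * ('C(n.+1, i))%:R * ('C(m + e - i, n))%:R : R)) (big_cat_nat _ (n:=d.+1)) //=.
rewrite [X in _ + X]big_nat_cond [X in _ + X]big1 ?addr0; last first.
  move=> i; rewrite andbT => /andP [hi1 hi2].
  rewrite (@bin_small (m + e - i) n) ?mulr0 //; rewrite /d in hi1; lia.
rewrite big_mkord.
have -> : (m + e == n) = (d == 0%N) by rewrite /d; apply/eqP/eqP; lia.
rewrite -(Sid R n d); apply: eq_bigr => i _.
have -> : (m + e - i = n + d - i)%N by rewrite /d; have := ltn_ord i; lia.
by [].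
Qed.

Lemma valm (R : comNzRingType) n (F : nat -> R) m : (m <= n)%N ->
  \sum_(0 <= j < n.+1) ('C(m + (n - j), n))%:R *
     (\sum_(0 <= i < j.+1) (-1) ^+ i * ('C(n.+1, i))%:R * F (j - i)%N) = F m.
Proof.
move=> mn.
pose Cp : {poly R} := \poly_(i < n.+2) ((-1) ^+ i * ('C(n.+1, i))%:R).
pose Fp : {poly R} := \poly_(k < n.+1) F k.
pose Bp : {poly R} := \poly_(e < n.+1) ('C(m + e, n))%:R.
have E1 : (Cp * Fp * Bp)`_n = \sum_(0 <= j < n.+1) ('C(m + (n - j), n))%:R *
     (\sum_(0 <= i < j.+1) (-1) ^+ i * ('C(n.+1, i))%:R * F (j - i)%N).
  rewrite coefM big_mkord; apply: eq_bigr => j _.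
  rewrite mulrC coef_poly (_ : (n - j < n.+1)%N); last by lia.
  congr (_ * _); rewrite coefM big_mkord; apply: eq_bigr => i _.
  have hj := ltn_ord j; have hi := ltn_ord i.
  rewrite !coef_poly (_ : (i < n.+2)%N); last by lia.
  by rewrite (_ : (j - i < n.+1)%N); last by lia.
rewrite -E1 mulrAC mulrC coefM.
under eq_bigr => k _ do rewrite coefM.
transitivity (\sum_(k < n.+1) F k * (k == m :> nat)%:R).
  apply: eq_bigr => k _; have hk := ltn_ord k.
  rewrite coef_poly hk; congr (_ * _).
  have -> : (k == m :> nat) = (m + (n - k) == n)%N by apply/eqP/eqP; lia.
  rewrite -(@Tid R n m (n - k) mn); apply: eq_big => // i _; have hi := ltn_ord i.
  rewrite !coef_poly (_ : (i < n.+2)%N); last by lia.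
  rewrite (_ : (n - k - i < n.+1)%N); last by lia.
  by rewrite (_ : (m + (n - k - i) = m + (n - k) - i)%N) //; lia.
transitivity (\sum_(k < n.+1 | k == m :> nat) F k).
  rewrite [RHS]big_mkcond; apply: eq_bigr => k _.
  by case: eqP => _; rewrite ?mulr1 ?mulr0.
by rewrite big_ord1_eq ltnS mn.
Qed.

Lemma gbinom_nat (R : realFieldType) N n : gbinom (N%:R : R) n = ('C(N, n))%:R.
Proof.
have Hp : \prod_(0 <= k < n) (N%:R - k%:R) = (N ^_ n)%:R :> R.
  elim: n => [|n IH]; first by rewrite big_nil ffactn0.
  rewrite big_nat_recr //= IH ffactnSr natrM.
  case: (leqP n N) => h; first by rewrite natrB.
  by rewrite ffact_small // !mul0r.
by rewrite /gbinom Hp -bin_ffact natrM mulfK // pnatr_eq0 -lt0n fact_gt0.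
Qed.

Lemma ell_le r n (w : colperm r n) : (ell w <= n)%N.
Proof.
rewrite /ell.
have H1 : [set C in porbits w.1 | cycle_color w.2 C == 0%N] \subset porbits w.1.
  by apply/subsetP => C; rewrite inE => /andP [].
apply: leq_trans (subset_leq_card H1) _.
by rewrite /porbits; apply: leq_trans (leq_imset_card _ _) _; rewrite card_ord.
Qed.

Theorem mainTheorem8 (R : realFieldType) (r n : nat) (q : R)
  (hr : (1 <= r)%N) (hn : (1 <= n)%N) (hq : 0 <= q) (w : colperm r n) :
  (r%:R * q + 1) ^+ ell w =
  \sum_(0 <= j < n.+1) gbinom (q + (n - j)%:R) n * foulkes R j w.
Proof.
have hL := @ell_le r n w.
set L := ell w in hL *.
pose h j := foulkes R j w.
pose P : {poly R} := \sum_(0 <= j < n.+1) (h j / n`!%:R) *: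
   \prod_(0 <= k < n) ('X - (k%:R - (n - j)%:R)%:P) - (r%:R *: 'X + 1) ^+ L.
have hP : forall x, P.[x] =
    \sum_(0 <= j < n.+1) gbinom (x + (n - j)%:R) n * h j - (r%:R * x + 1) ^+ L.
  move=> x; rewrite /P hornerD hornerN horner_sum horner_exp hornerD hornerZ hornerX hornerC.
  congr (_ - _); apply: eq_bigr => j _.
  rewrite hornerZ horner_prod /gbinom.
  have -> : \prod_(0 <= i < n) ('X - (i%:R - (n - j)%:R)%:P).[x] =
     \prod_(0 <= k < n) (x + (n - j)%:R - k%:R) :> R.
    by apply: eq_bigr => k _; rewrite hornerXsubC; ring.
  ring.
have sz : (size P <= n.+1)%N.
  rewrite /P; apply: leq_trans (size_polyD _ _) _; rewrite geq_max size_polyN; apply/andP; split.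
    elim/big_ind: _ => [|p1 p2 h1 h2|j _]; first by rewrite size_poly0.
      by apply: leq_trans (size_polyD _ _) _; rewrite geq_max h1 h2.
    apply: leq_trans (size_scale_leq _ _) _.
    by rewrite size_prod_XsubC size_iota subn0.
  apply: leq_trans (size_poly_exp_leq _ _) _.
  have s2 : (size ((r%:R *: 'X + 1)%R : {poly R}) <= 2)%N.
    apply: leq_trans (size_polyD _ _) _; rewrite geq_max size_poly1 andbT.
    by apply: leq_trans (size_scale_leq _ _) _; rewrite size_polyX.
  rewrite ltnS; apply: leq_trans _ hL.
  have : ((size ((r%:R *: 'X + 1)%R : {poly R})).-1 <= 1)%N by case: (size _) s2 => [|[|[|]]].
  by move=> h1; rewrite -[X in (_ <= X)%N]mul1n leq_mul2r h1 orbT.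
have roots : forall m, (m <= n)%N -> P.[m%:R] = 0.
  move=> m mn; rewrite hP; apply/eqP; rewrite subr_eq0; apply/eqP.
  under eq_bigr => j _ do rewrite -natrD gbinom_nat.
  rewrite /h /foulkes /chi.
  rewrite (@valm R n (fun k => ((r * k + 1)%:R : R) ^+ L) m mn).
  by rewrite natrD natrM.
have P0 : P = 0.
  apply/eqP; apply: contraT => nz.
  have := @max_poly_roots R P [seq i%:R | i <- iota 0 n.+1] nz.
  rewrite size_map size_iota => H.
  have : (n.+1 < size P)%N.
    apply: H.
      apply/allP => x /mapP [m]; rewrite mem_iota add0n ltnS => /andP [_ hm] ->.
      by rewrite /root roots.
    rewrite map_inj_uniq ?iota_uniq // => a b /eqP; by rewrite eqr_nat => /eqP.
  by rewrite ltnNge sz.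
have := hP q; rewrite P0 horner0 => /eqP; rewrite eq_sym subr_eq0 => /eqP ->.
by [].
Qed.
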